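(* Let $A,B$ be non-empty sets, $I$ a non-empty index set, $\{V_i\}_{i\in I}\subseteq\mathcal R(A)$, $\{W_i\}_{i\in I}\subseteq\mathcal R(B)$, $Z\in\mathcal R(A,B)$. For each $t\in\{1,\dots,6\}$, the system $WL^{2\text{-}t}(A,B,I,V_i,W_i,Z)$ has a greatest solution (possibly the empty relation, i.e. constantly $0$). If moreover $Z$ is a partial fuzzy function, then the greatest solutions to $WL^{2\text{-}3}(A,B,I,V_i,W_i,Z)$ and $WL^{2\text{-}4}(A,B,I,V_i,W_i,Z)$ are partial fuzzy functions.
   Context: $\mathcal L=(L,\wedge,\vee,\otimes,\to,0,1)$ is a complete residuated lattice; $x\leftrightarrow y=(x\to y)\wedge(y\to x)$. For non-empty sets $X,Y$, $\mathcal R(X,Y)$ is the set of fuzzy relations $X\times Y\to L$, $\mathcal R(X)=\mathcal R(X,X)$, ordered pointwise; $R^{-1}(y,x)=R(x,y)$; $(R\circ S)(x,t)=\bigvee_{y}R(x,y)\otimes S(y,t)$. Heterogeneous systems with unknown $U\in\mathcal R(A,B)$: $WL^{2\text{-}1}$: $U^{-1}\circ V_i\le W_i\circ U^{-1}$ ($i\in I$), $U\le Z$; $WL^{2\text{-}2}$: $V_i\circ U\le U\circ W_i$ ($i\in I$), $U\le Z$; $WL^{2\text{-}3}$: $U^{-1}\circ V_i\le W_i\circ U^{-1}$ and $U\circ W_i\le V_i\circ U$ ($i\in I$), $U\le Z$; $WL^{2\text{-}4}$: $V_i\circ U\le U\circ W_i$ and $W_i\circ U^{-1}\le U^{-1}\circ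 V_i$ ($i\in I$), $U\le Z$; $WL^{2\text{-}5}$: $V_i\circ U=U\circ W_i$ ($i\in I$), $U\le Z$; $WL^{2\text{-}6}$: $U^{-1}\circ V_i=W_i\circ U^{-1}$ ($i\in I$), $U\le Z$. For $R\in\mathcal R(A,B)$, its kernel is $E_A^R(a_1,a_2)=\bigwedge_{b\in B}R(a_1,b)\leftrightarrow R(a_2,b)$ and co-kernel $E_B^R(b_1,b_2)=\bigwedge_{a\in A}R(a,b_1)\leftrightarrow R(a,b_2)$. $R$ is a partial fuzzy function if $R(a,b_1)\otimes R(a,b_2)\le E_B^R(b_1,b_2)$ for all $a\in A$, $b_1,b_2\in B$ (equivalently, as is known, $R\circ R^{-1}\circ R\le R$). *)

(* Defs.v *)
Record CRL := {
  carrier :> Type;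
  le : carrier -> carrier -> Prop;
  sup : (carrier -> Prop) -> carrier;
  inf : (carrier -> Prop) -> carrier;
  tens : carrier -> carrier -> carrier;
  res : carrier -> carrier -> carrier;
  zero : carrier;
  one : carrier;
  le_refl : forall x, le x x;
  le_antisym : forall x y, le x y -> le y x -> x = y;
  le_trans : forall x y z, le x y -> le y z -> le x z;
  sup_ub : forall (S : carrier -> Prop) x, S x -> le x (sup S);
  sup_least : forall (S : carrier -> Prop) y,
      (forall x, S x -> le x y) -> le (sup S) y;
  inf_lb : forall (S : carrier -> Prop) x, S x -> le (inf S) x;
  inf_greatest : forall (S : carrier -> Prop) y,
      (forall x, S x -> le y x) -> le y (inf S);
  zero_least : forall x, le zero x;
  one_greatest : forall x, le x one;
  tens_assoc : forall x y z, tens x (tens y z) = tens (tens x y) z;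
  tens_comm : forall x y, tens x y = tens y x;
  tens_one : forall x, tens x one = x;
  adjoint : forall x y z, le (tens x y) z <-> le x (res y z)
}.

Arguments le {c}.
Arguments sup {c}.
Arguments inf {c}.
Arguments tens {c}.
Arguments res {c}.
Arguments zero {c}.
Arguments one {c}.

Section Rel.
Variable L : CRL.

Definition meet (x y : L) : L := inf (fun z => z = x \/ z = y).
Definition biimp (x y : L) : L := meet (res x y) (res y x).

Definition frel (X Y : Type) := X -> Y -> L.

Definition rle {X Y : Type} (R S : frel X Y) : Prop :=
  forall x y, le (R x y) (S x y).
Definition req {X Y : Type} (R S : frel X Y) : Prop :=
  forall x y, R x y = S x y.
Definition inv {X Y : Type} (R : frel X Y) : frel Y X := fun y x => R x y.
Definition comp {X Y T : Type} (R : frel X Y) (S : frel Y T) : frel X T :=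
  fun x t => sup (fun v => exists y, v = tens (R x y) (S y t)).

Definition kernel {X Y : Type} (R : frel X Y) : frel X X :=
  fun a1 a2 => inf (fun v => exists b, v = biimp (R a1 b) (R a2 b)).
Definition cokernel {X Y : Type} (R : frel X Y) : frel Y Y :=
  fun b1 b2 => inf (fun v => exists a, v = biimp (R a b1) (R a b2)).

Definition partial_fuzzy_function {X Y : Type} (R : frel X Y) : Prop :=
  forall a b1 b2, le (tens (R a b1) (R a b2)) (cokernel R b1 b2).

Definition greatest {X Y : Type} (P : frel X Y -> Prop) (U : frel X Y) : Prop :=
  P U /\ forall U', P U' -> rle U' U.

Section Systems.
Variables (A B I : Type) (V : I -> frel A A) (W : I -> frel B B) (Z : frel A B).

Definition WL2_1 (U : frel A B) : Prop :=
  (forall i, rle (comp (inv U) (V i)) (comp (W i) (inv U))) /\ rle U Z.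
Definition WL2_2 (U : frel A B) : Prop :=
  (forall i, rle (comp (V i) U) (comp U (W i))) /\ rle U Z.
Definition WL2_3 (U : frel A B) : Prop :=
  (forall i, rle (comp (inv U) (V i)) (comp (W i) (inv U)) /\
             rle (comp U (W i)) (comp (V i) U)) /\ rle U Z.
Definition WL2_4 (U : frel A B) : Prop :=
  (forall i, rle (comp (V i) U) (comp U (W i)) /\
             rle (comp (W i) (inv U)) (comp (inv U) (V i))) /\ rle U Z.
Definition WL2_5 (U : frel A B) : Prop :=
  (forall i, req (comp (V i) U) (comp U (W i))) /\ rle U Z.
Definition WL2_6 (U : frel A B) : Prop :=
  (forall i, req (comp (inv U) (V i)) (comp (W i) (inv U))) /\ rle U Z.
End Systems.
End Rel.

Arguments rle {L X Y}.
Arguments req {L X Y}.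
Arguments inv {L X Y}.
Arguments comp {L X Y T}.
Arguments kernel {L X Y}.
Arguments cokernel {L X Y}.
Arguments partial_fuzzy_function {L X Y}.
Arguments greatest {L X Y}.
Arguments WL2_1 {L A B I}.
Arguments WL2_2 {L A B I}.
Arguments WL2_3 {L A B I}.
Arguments WL2_4 {L A B I}.
Arguments WL2_5 {L A B I}.
Arguments WL2_6 {L A B I}.

(* Main.v *)
Require Import Defs.

Lemma lt' {L : CRL} (y : L) {x z : L} : le x y -> le y z -> le x z.
Proof. intros; eapply le_trans; eauto. Qed.

Lemma tens_mono_l (L : CRL) (x y z : L) : le x y -> le (tens x z) (tens y z).
Proof. intro H. apply adjoint. apply (lt' y); auto. apply adjoint. apply le_refl. Qed.

Lemma tens_mono_r (L : CRL) (x y z : L) : le x y -> le (tens z x) (tens z y).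
Proof. intro H. rewrite (tens_comm _ z x), (tens_comm _ z y). now apply tens_mono_l. Qed.

Definition jsup (L : CRL) {J : Type} (Q : J -> Prop) (f : J -> L) : L :=
  sup (fun v => exists j, Q j /\ v = f j).

Lemma jsup_ub (L : CRL) {J} (Q : J -> Prop) (f : J -> L) j : Q j -> le (f j) (jsup L Q f).
Proof. intro H. apply sup_ub. eauto. Qed.

Lemma jsup_least (L : CRL) {J} (Q : J -> Prop) (f : J -> L) y :
  (forall j, Q j -> le (f j) y) -> le (jsup L Q f) y.
Proof. intro H. apply sup_least. intros x [j [Hj ->]]. auto. Qed.

Lemma tens_sup_l_least (L : CRL) (S : L -> Prop) (z c : L) :
  (forall s, S s -> le (tens s z) c) -> le (tens (sup S) z) c.
Proof. intro H. apply adjoint. apply sup_least. intros s Hs. apply adjoint. auto. Qed.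

Lemma tens_sup_r_least (L : CRL) (S : L -> Prop) (z c : L) :
  (forall s, S s -> le (tens z s) c) -> le (tens z (sup S)) c.
Proof. intro H. rewrite tens_comm. apply tens_sup_l_least. intros. rewrite tens_comm. auto. Qed.

Lemma tens_jsup_l (L : CRL) {J} (Q : J -> Prop) (f : J -> L) z :
  le (tens (jsup L Q f) z) (jsup L Q (fun j => tens (f j) z)).
Proof. apply tens_sup_l_least. intros s [j [Hj ->]].
  exact (jsup_ub L Q (fun j => tens (f j) z) j Hj). Qed.

Lemma tens_jsup_r (L : CRL) {J} (Q : J -> Prop) (f : J -> L) z :
  le (tens z (jsup L Q f)) (jsup L Q (fun j => tens z (f j))).
Proof. apply tens_sup_r_least. intros s [j [Hj ->]].
  exact (jsup_ub L Q (fun j => tens z (f j)) j Hj). Qed.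

Lemma comp_le (L : CRL) {X Y T} (R : frel L X Y) (S : frel L Y T) x y t :
  le (tens (R x y) (S y t)) (comp R S x t).
Proof. apply sup_ub. eauto. Qed.

Lemma comp_least (L : CRL) {X Y T} (R : frel L X Y) (S : frel L Y T) x t c :
  (forall y, le (tens (R x y) (S y t)) c) -> le (comp R S x t) c.
Proof. intro H. apply sup_least. intros v [y ->]. auto. Qed.

Lemma rt {L : CRL} {X Y} (S : frel L X Y) {R T : frel L X Y} : rle R S -> rle S T -> rle R T.
Proof. intros H1 H2 x y. eapply le_trans; eauto. Qed.

Lemma comp_monoL (L : CRL) {X Y T} (R R' : frel L X Y) (S : frel L Y T) :
  rle R R' -> rle (comp R S) (comp R' S).
Proof. intros H x t. apply comp_least. intro y. apply (lt' (tens (R' x y) (S y t))).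
  apply tens_mono_l; apply H. apply comp_le. Qed.

Lemma comp_monoR (L : CRL) {X Y T} (R : frel L X Y) (S S' : frel L Y T) :
  rle S S' -> rle (comp R S) (comp R S').
Proof. intros H x t. apply comp_least. intro y. apply (lt' (tens (R x y) (S' y t))).
  apply tens_mono_r; apply H. apply comp_le. Qed.

Lemma assoc1 (L : CRL) {X Y Z T} (R : frel L X Y) (S : frel L Y Z) (U : frel L Z T) :
  rle (comp (comp R S) U) (comp R (comp S U)).
Proof. intros x t. apply comp_least. intro z. apply tens_sup_l_least.
  intros s [y ->]. rewrite <- tens_assoc.
  apply (lt' (tens (R x y) (comp S U y t))). apply tens_mono_r. apply comp_le. apply comp_le. Qed.

Lemma assoc2 (L : CRL) {X Y Z T} (R : frel L X Y) (S : frel L Y Z) (U : frel L Z T) :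
  rle (comp R (comp S U)) (comp (comp R S) U).
Proof. intros x t. apply comp_least. intro y. apply tens_sup_r_least.
  intros s [z ->]. rewrite tens_assoc.
  apply (lt' (tens (comp R S x z) (U z t))). apply tens_mono_l. apply comp_le. apply comp_le. Qed.

Lemma inv_comp1 (L : CRL) {X Y T} (R : frel L X Y) (S : frel L Y T) :
  rle (inv (comp R S)) (comp (inv S) (inv R)).
Proof. intros t x. apply comp_least. intro y. rewrite tens_comm.
  exact (comp_le L (inv S) (inv R) t y x). Qed.

Lemma inv_comp2 (L : CRL) {X Y T} (R : frel L X Y) (S : frel L Y T) :
  rle (comp (inv S) (inv R)) (inv (comp R S)).
Proof. intros t x. apply comp_least. intro y. rewrite tens_comm.
  exact (comp_le L R S x y t). Qed.

Lemma inv_mono (L : CRL) {X Y} (R S : frel L X Y) : rle R S -> rle (inv R) (inv S).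
Proof. intros H x y. apply H. Qed.

Definition ustar {L : CRL} {X Y} (P : frel L X Y -> Prop) : frel L X Y :=
  fun x y => jsup L P (fun U => U x y).

Definition bigsup {L : CRL} {J X Y} (Q : J -> Prop) (G : J -> frel L X Y) : frel L X Y :=
  fun x y => jsup L Q (fun j => G j x y).

Lemma bigsup_ub (L : CRL) {J X Y} (Q : J -> Prop) (G : J -> frel L X Y) j :
  Q j -> rle (G j) (bigsup Q G).
Proof. intros H x y. exact (jsup_ub L Q (fun j => G j x y) j H). Qed.

Lemma comp_bigsup_l (L : CRL) {J X Y T} (Q : J -> Prop) (G : J -> frel L X Y) (S : frel L Y T) x t :
  le (comp (bigsup Q G) S x t) (jsup L Q (fun j => comp (G j) S x t)).
Proof. apply comp_least. intro y. unfold bigsup.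
  eapply le_trans; [apply tens_jsup_l|]. apply jsup_least. intros j Hj.
  apply (lt' (comp (G j) S x t)). apply comp_le.
  exact (jsup_ub L Q (fun j => comp (G j) S x t) j Hj). Qed.

Lemma comp_bigsup_r (L : CRL) {J X Y T} (Q : J -> Prop) (G : J -> frel L Y T) (S : frel L X Y) x t :
  le (comp S (bigsup Q G) x t) (jsup L Q (fun j => comp S (G j) x t)).
Proof. apply comp_least. intro y. unfold bigsup.
  eapply le_trans; [apply tens_jsup_r|]. apply jsup_least. intros j Hj.
  apply (lt' (comp S (G j) x t)). apply comp_le.
  exact (jsup_ub L Q (fun j => comp S (G j) x t) j Hj). Qed.

Lemma closure_lr (L : CRL) {J X Y} (Q : J -> Prop) (G : J -> frel L X Y) (S : frel L Y Y) (T : frel L X X) :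
  (forall j, Q j -> rle (comp (G j) S) (comp T (G j))) ->
  rle (comp (bigsup Q G) S) (comp T (bigsup Q G)).
Proof. intros H x t. eapply le_trans; [apply comp_bigsup_l|]. apply jsup_least. intros j Hj.
  apply (lt' (comp T (G j) x t)). apply H; auto. apply comp_monoR. apply bigsup_ub; auto. Qed.

Lemma closure_rl (L : CRL) {J X Y} (Q : J -> Prop) (G : J -> frel L X Y) (S : frel L X X) (T : frel L Y Y) :
  (forall j, Q j -> rle (comp S (G j)) (comp (G j) T)) ->
  rle (comp S (bigsup Q G)) (comp (bigsup Q G) T).
Proof. intros H x t. eapply le_trans; [apply comp_bigsup_r|]. apply jsup_least. intros j Hj.
  apply (lt' (comp (G j) T x t)). apply H; auto. apply comp_monoL. apply bigsup_ub; auto. Qed.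

Lemma us_lr (L : CRL) {X Y} (P : frel L X Y -> Prop) S T :
  (forall U, P U -> rle (comp U S) (comp T U)) -> rle (comp (ustar P) S) (comp T (ustar P)).
Proof. intro H. exact (closure_lr L P (fun U => U) S T H). Qed.
Lemma us_rl (L : CRL) {X Y} (P : frel L X Y -> Prop) S T :
  (forall U, P U -> rle (comp S U) (comp U T)) -> rle (comp S (ustar P)) (comp (ustar P) T).
Proof. intro H. exact (closure_rl L P (fun U => U) S T H). Qed.
Lemma us_lr_inv (L : CRL) {X Y} (P : frel L X Y -> Prop) S T :
  (forall U, P U -> rle (comp (inv U) S) (comp T (inv U))) ->
  rle (comp (inv (ustar P)) S) (comp T (inv (ustar P))).
Proof. intro H. exact (closure_lr L P (fun U => inv U) S T H). Qed.
Lemma us_rl_inv (L : CRL) {X Y} (P : frel L X Y -> Prop) S T :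
  (forall U, P U -> rle (comp S (inv U)) (comp (inv U) T)) ->
  rle (comp S (inv (ustar P))) (comp (inv (ustar P)) T).
Proof. intro H. exact (closure_rl L P (fun U => inv U) S T H). Qed.

Lemma us_le (L : CRL) {X Y} (P : frel L X Y -> Prop) (Z : frel L X Y) :
  (forall U, P U -> rle U Z) -> rle (ustar P) Z.
Proof. intros H x y. apply jsup_least. intros U HU. apply H; auto. Qed.

Lemma us_greatest (L : CRL) {X Y} (P : frel L X Y -> Prop) :
  P (ustar P) -> greatest P (ustar P).
Proof. intro H. split; auto. intros U HU x y. exact (jsup_ub L P (fun U => U x y) U HU). Qed.

Lemma rle_req (L : CRL) {X Y} (R S : frel L X Y) : rle R S -> rle S R -> req R S.
Proof. intros H1 H2 x y. apply le_antisym; auto. Qed.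
Lemma req_rle1 (L : CRL) {X Y} (R S : frel L X Y) : req R S -> rle R S.
Proof. intros H x y. rewrite H. apply le_refl. Qed.
Lemma req_rle2 (L : CRL) {X Y} (R S : frel L X Y) : req R S -> rle S R.
Proof. intros H x y. rewrite H. apply le_refl. Qed.

Lemma pff_le (L : CRL) {X Y} (Z : frel L X Y) :
  partial_fuzzy_function Z -> rle (comp (comp Z (inv Z)) Z) Z.
Proof. intros H x t. apply comp_least. intro z. apply tens_sup_l_least.
  intros s [y ->]. rewrite <- tens_assoc. rewrite tens_comm. apply adjoint.
  apply (lt' (cokernel Z y t)). apply H.
  apply (lt' (biimp L (Z x y) (Z x t))). apply inf_lb. eauto.
  apply inf_lb. auto. Qed.

Lemma tri (L : CRL) {X Y} (U : frel L X Y) a a' c1 c2 :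
  rle (comp (comp U (inv U)) U) U ->
  le (tens (tens (U a c1) (U a c2)) (U a' c1)) (U a' c2).
Proof. intro H. apply (lt' (comp (comp U (inv U)) U a' c2)); [| apply H].
  rewrite tens_comm, tens_assoc.
  apply (lt' (tens (comp U (inv U) a' a) (U a c2))).
  apply tens_mono_l. exact (comp_le L U (inv U) a' c1 a).
  exact (comp_le L (comp U (inv U)) U a' a c2). Qed.

Lemma le_pff (L : CRL) {X Y} (U : frel L X Y) :
  rle (comp (comp U (inv U)) U) U -> partial_fuzzy_function U.
Proof. intros H a b1 b2. unfold cokernel. apply inf_greatest. intros v [a' ->].
  unfold biimp, meet. apply inf_greatest. intros w [-> | ->]; apply (proj1 (adjoint _ _ _ _)).
  - apply tri; auto.
  - rewrite (tens_comm _ (U a b1) (U a b2)). apply tri; auto. Qed.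

Lemma invU'_le (L : CRL) {X Y} (U : frel L X Y) :
  rle (inv (comp (comp U (inv U)) U)) (comp (inv U) (comp U (inv U))).
Proof. apply (rt (comp (inv U) (inv (comp U (inv U))))). apply inv_comp1.
  apply comp_monoR. exact (inv_comp1 L U (inv U)). Qed.

Lemma le_invU' (L : CRL) {X Y} (U : frel L X Y) :
  rle (comp (inv U) (comp U (inv U))) (inv (comp (comp U (inv U)) U)).
Proof. apply (rt (comp (inv U) (inv (comp U (inv U))))).
  apply comp_monoR. exact (inv_comp2 L U (inv U)). apply inv_comp2. Qed.

Lemma U'_le_Z (L : CRL) {X Y} (U Z : frel L X Y) :
  partial_fuzzy_function Z -> rle U Z -> rle (comp (comp U (inv U)) U) U ->
  True.
Proof. auto. Qed.

Lemma U'Z (L : CRL) {X Y} (U Z : frel L X Y) :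
  partial_fuzzy_function Z -> rle U Z -> rle (comp (comp U (inv U)) U) Z.
Proof. intros HZ H. apply (rt (comp (comp Z (inv Z)) Z)); [| apply pff_le; auto].
  apply (rt (comp (comp Z (inv Z)) U)). apply comp_monoL.
  apply (rt (comp Z (inv U))). apply comp_monoL; auto. apply comp_monoR, inv_mono; auto.
  apply comp_monoR; auto. Qed.

Lemma wl3_step (L : CRL) {A B I} (V : I -> frel L A A) (W : I -> frel L B B) (Z : frel L A B) U :
  partial_fuzzy_function Z -> WL2_3 V W Z U -> WL2_3 V W Z (comp (comp U (inv U)) U).
Proof. intros HZ [HS HUZ]. split; [| apply U'Z; auto]. intro i. destruct (HS i) as [H1 H2].
  set (K := comp U (inv U)).
  assert (KV : rle (comp K (V i)) (comp (V i) K)).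
  { apply (rt (comp U (comp (inv U) (V i)))). apply assoc1.
    apply (rt (comp U (comp (W i) (inv U)))). apply comp_monoR; auto.
    apply (rt (comp (comp U (W i)) (inv U))). apply assoc2.
    apply (rt (comp (comp (V i) U) (inv U))). apply comp_monoL; auto.
    apply assoc1. }
  split.
  - apply (rt (comp (comp (inv U) K) (V i))). apply comp_monoL, invU'_le.
    apply (rt (comp (inv U) (comp K (V i)))). apply assoc1.
    apply (rt (comp (inv U) (comp (V i) K))). apply comp_monoR; auto.
    apply (rt (comp (comp (inv U) (V i)) K)). apply assoc2.
    apply (rt (comp (comp (W i) (inv U)) K)). apply comp_monoL; auto.
    apply (rt (comp (W i) (comp (inv U) K))). apply assoc1.
    apply comp_monoR, le_invU'.
  - apply (rt (comp K (comp U (W i)))). apply assoc1.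
    apply (rt (comp K (comp (V i) U))). apply comp_monoR; auto.
    apply (rt (comp (comp K (V i)) U)). apply assoc2.
    apply (rt (comp (comp (V i) K) U)). apply comp_monoL; auto.
    apply assoc1.
Qed.

Lemma wl4_step (L : CRL) {A B I} (V : I -> frel L A A) (W : I -> frel L B B) (Z : frel L A B) U :
  partial_fuzzy_function Z -> WL2_4 V W Z U -> WL2_4 V W Z (comp (comp U (inv U)) U).
Proof. intros HZ [HS HUZ]. split; [| apply U'Z; auto]. intro i. destruct (HS i) as [H1 H2].
  set (K := comp U (inv U)).
  assert (VK : rle (comp (V i) K) (comp K (V i))).
  { apply (rt (comp (comp (V i) U) (inv U))). apply assoc2.
    apply (rt (comp (comp U (W i)) (inv U))). apply comp_monoL; auto.
    apply (rt (comp U (comp (W i) (inv U)))). apply assoc1.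
    apply (rt (comp U (comp (inv U) (V i)))). apply comp_monoR; auto.
    apply assoc2. }
  split.
  - apply (rt (comp (comp (V i) K) U)). apply assoc2.
    apply (rt (comp (comp K (V i)) U)). apply comp_monoL; auto.
    apply (rt (comp K (comp (V i) U))). apply assoc1.
    apply (rt (comp K (comp U (W i)))). apply comp_monoR; auto.
    apply assoc2.
  - apply (rt (comp (W i) (comp (inv U) K))). apply comp_monoR, invU'_le.
    apply (rt (comp (comp (W i) (inv U)) K)). apply assoc2.
    apply (rt (comp (comp (inv U) (V i)) K)). apply comp_monoL; auto.
    apply (rt (comp (inv U) (comp (V i) K))). apply assoc1.
    apply (rt (comp (inv U) (comp K (V i)))). apply comp_monoR; auto.
    apply (rt (comp (comp (inv U) K) (V i))). apply assoc2.
    apply comp_monoL, le_invU'.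
Qed.

Theorem theorem4p4 (L : CRL) (A B I : Type)
  (hA : inhabited A) (hB : inhabited B) (hI : inhabited I)
  (V : I -> frel L A A) (W : I -> frel L B B) (Z : frel L A B) :
  ((exists U, greatest (WL2_1 V W Z) U) /\
   (exists U, greatest (WL2_2 V W Z) U) /\
   (exists U, greatest (WL2_3 V W Z) U) /\
   (exists U, greatest (WL2_4 V W Z) U) /\
   (exists U, greatest (WL2_5 V W Z) U) /\
   (exists U, greatest (WL2_6 V W Z) U)) /\
  (partial_fuzzy_function Z ->
     (forall U, greatest (WL2_3 V W Z) U -> partial_fuzzy_function U) /\
     (forall U, greatest (WL2_4 V W Z) U -> partial_fuzzy_function U)).
Proof.
  split.
  - repeat split.
    + eexists; apply us_greatest. split; [intro i | apply us_le; intros U HU; apply HU].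
      apply us_lr_inv. intros U HU. apply HU.
    + eexists; apply us_greatest. split; [intro i | apply us_le; intros U HU; apply HU].
      apply us_rl. intros U HU. apply HU.
    + eexists; apply us_greatest. split; [intro i | apply us_le; intros U HU; apply HU].
      split. apply us_lr_inv. intros U HU. apply HU.
      apply us_lr. intros U HU. apply HU.
    + eexists; apply us_greatest. split; [intro i | apply us_le; intros U HU; apply HU].
      split. apply us_rl. intros U HU. apply HU.
      apply us_rl_inv. intros U HU. apply HU.
    + eexists; apply us_greatest. split; [intro i | apply us_le; intros U HU; apply HU].
      apply rle_req. apply us_rl. intros U HU. apply req_rle1, HU.
      apply us_lr. intros U HU. apply req_rle2, HU.
    + eexists; apply us_greatest. split; [intro i | apply us_le; intros U HU; apply HU].
      apply rle_req. apply us_lr_inv. intros U HU. apply req_rle1, HU.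
      apply us_rl_inv. intros U HU. apply req_rle2, HU.
  - intro HZ. split; intros U [HU Hmax]; apply le_pff; apply Hmax.
    + apply wl3_step; auto.
    + apply wl4_step; auto.
Qed.
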